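(* Let $\mathcal{H}_0,\mathcal{H}_1,\mathcal{H}_2$ be finite-dimensional Hilbert spaces, and let $\varrho_{1|0}\in\mathcal{L}(\mathcal{H}_0\otimes\mathcal{H}_1)$, $\varrho_{2|0}\in\mathcal{L}(\mathcal{H}_0\otimes\mathcal{H}_2)$ be the Choi–Jamiołkowski operators of CPTP maps $\mathcal{N}_{1|0}:\mathcal{L}(\mathcal{H}_0)\to\mathcal{L}(\mathcal{H}_1)$ and $\mathcal{N}_{2|0}:\mathcal{L}(\mathcal{H}_0)\to\mathcal{L}(\mathcal{H}_2)$. Consider the optimization problem $$\sup\ \mathrm{Tr}[W\varrho_{2|0}]+\mathrm{Tr}[\Lambda]$$ over $W\in\mathcal{L}(\mathcal{H}_0\otimes\mathcal{H}_2)$, $\Psi_0,\Psi_1\in\mathcal{L}(\mathcal{H}_0)$, $\Lambda\in\mathcal{L}(\mathcal{H}_1)$ subject to $$\begin{bmatrix}\Psi_0\otimes\mathbb{1}_{\mathcal{H}_2} & W\\ W^\dagger & \Psi_1\otimes\mathbb{1}_{\mathcal{H}_2}\end{bmatrix}\geq 0,\qquad \mathrm{Tr}[\Psi_0]=\mathrm{Tr}[\Psi_1]=1,$$ $$\Lambda\otimes\mathbb{1}_{\mathcal{H}_2}\leq-\mathrm{Tr}_{\mathcal{H}_0}\!\left[\big((\varrho_{1|0})^{T_{\mathcal{H}_1}}\otimes\mathbb{1}_{\mathcal{H}_2}\big)\big(W\otimes\mathbb{1}_{\mathcal{H}_1}\big)\right].$$ If there exists a CPTP map $\mathcal{N}_{2|1}:\mathcal{L}(\mathcal{H}_1)\to\mathcal{L}(\mathcal{H}_2)$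 with $\mathcal{N}_{2|0}=\mathcal{N}_{2|1}\circ\mathcal{N}_{1|0}$, then every feasible point $(W,\Psi_0,\Psi_1,\Lambda)$ satisfies $\mathrm{Tr}[W\varrho_{2|0}]+\mathrm{Tr}[\Lambda]\leq 0$; i.e. the optimal value of the problem is at most $0$.
   Context: Fix orthonormal bases of all Hilbert spaces; transpositions are with respect to them. For a linear map $\mathcal{N}:\mathcal{L}(\mathcal{H}_{\rm in})\to\mathcal{L}(\mathcal{H}_{\rm out})$, its Choi–Jamiołkowski operator is $\varrho_{\mathcal{N}}=\sum_{a,b}|a\rangle\langle b|\otimes\mathcal{N}(|a\rangle\langle b|)\in\mathcal{L}(\mathcal{H}_{\rm in}\otimes\mathcal{H}_{\rm out})$. $T_{\mathcal{H}_1}$ is partial transposition on the $\mathcal{H}_1$ factor; $(\varrho_{1|0})^{T_{\mathcal{H}_1}}\otimes\mathbb{1}_{\mathcal{H}_2}$ and $W\otimes\mathbb{1}_{\mathcal{H}_1}$ (meaning $W$ acting on the $\mathcal{H}_0\otimes\mathcal{H}_2$ factors and the identity on $\mathcal{H}_1$) are regarded as operators on $\mathcal{H}_0\otimes\mathcal{H}_1\otimes\mathcal{H}_2$, and $\mathrm{Tr}_{\mathcal{H}_0}$ is the partial trace over $\mathcal{H}_0$, giving an operator on $\mathcal{H}_1\otimes\mathcal{H}_2$. Operator inequalities $A\le B$ mean $B-A$ is Hermitian positive semidefinite. *)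

(* Defs.v *)
(* Scalars: an arbitrary numClosedFieldType C (e.g. algC or
   complex R), with its partial order (0 <= z  iff  z is real and nonnegative). *)
From HB Require Import structures.
From mathcomp Require Import all_boot all_order all_algebra.

Set Implicit Arguments.
Unset Strict Implicit.
Unset Printing Implicit Defensive.

Import Order.TTheory GRing.Theory Num.Theory Num.Def.
Local Open Scope ring_scope.

Section QDefs.
Variable C : numClosedFieldType.

Definition dagger m n (A : 'M[C]_(m, n)) : 'M[C]_(n, m) := (map_mx conjC A)^T.

Definition psd n (A : 'M[C]_n) : Prop :=
  A = dagger A /\ forall u : 'rV[C]_n, 0 <= (u *m A *m dagger u) 0 0.

Definition opLe n (A B : 'M[C]_n) : Prop := psd (B - A).

(* Tensor index conventions: the basis of H_a (x) H_b (dims m, n) is indexed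
   by 'I_(m * n), the pair (i, j) being  mxvec_index i j.  These are its
   two components. *)
Definition idx1 m n (k : 'I_(m * n)) : 'I_m :=
  (enum_val (cast_ord (esym (mxvec_cast m n)) k)).1.
Definition idx2 m n (k : 'I_(m * n)) : 'I_n :=
  (enum_val (cast_ord (esym (mxvec_cast m n)) k)).2.

Definition kron m n (A : 'M[C]_m) (B : 'M[C]_n) : 'M[C]_(m * n) :=
  \matrix_(k, l) (A (idx1 k) (idx1 l) * B (idx2 k) (idx2 l)).

Definition ptrace1 m n (X : 'M[C]_(m * n)) : 'M[C]_n :=
  \matrix_(j, j') \sum_(i < m) X (mxvec_index i j) (mxvec_index i j').

Definition ptransp2 m n (X : 'M[C]_(m * n)) : 'M[C]_(m * n) :=
  \matrix_(k, l) X (mxvec_index (idx1 k) (idx2 l)) (mxvec_index (idx1 l) (idx2 k)).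

(* (id_k (x) N)(X): N applied blockwise to X in L(C^k (x) H_in). *)
Definition ampl k din dout (N : 'M[C]_din -> 'M[C]_dout)
    (X : 'M[C]_(k * din)) : 'M[C]_(k * dout) :=
  \matrix_(p, q)
    (N (\matrix_(a, b) X (mxvec_index (idx1 p) a) (mxvec_index (idx1 q) b)))
      (idx2 p) (idx2 q).

Definition CP din dout (N : 'M[C]_din -> 'M[C]_dout) : Prop :=
  forall (k : nat) (X : 'M[C]_(k * din)), psd X -> psd (ampl N X).
Definition TP din dout (N : 'M[C]_din -> 'M[C]_dout) : Prop :=
  forall X : 'M[C]_din, \tr (N X) = \tr X.
Definition CPTP din dout (N : {linear 'M[C]_din -> 'M[C]_dout}) : Prop :=
  CP N /\ TP N.

Definition choi din dout (N : 'M[C]_din -> 'M[C]_dout) : 'M[C]_(din * dout) :=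
  \sum_(a < din) \sum_(b < din) kron (delta_mx a b) (N (delta_mx a b)).

(* Operators on H0 (x) (H1 (x) H2), index mxvec_index a (mxvec_index b c). *)
Definition mx3 d0 d1 d2
    (f : 'I_d0 -> 'I_d1 -> 'I_d2 -> 'I_d0 -> 'I_d1 -> 'I_d2 -> C)
    : 'M[C]_(d0 * (d1 * d2)) :=
  \matrix_(k, l) f (idx1 k) (idx1 (idx2 k)) (idx2 (idx2 k))
                   (idx1 l) (idx1 (idx2 l)) (idx2 (idx2 l)).

(* X (x) 1_{H2}, for X on H0 (x) H1. *)
Definition ext01 d0 d1 d2 (X : 'M[C]_(d0 * d1)) : 'M[C]_(d0 * (d1 * d2)) :=
  mx3 (fun a b c a' b' c' =>
         X (mxvec_index a b) (mxvec_index a' b') * (c == c')%:R).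

(* W (x) 1_{H1}, for W on H0 (x) H2 (identity on the middle factor H1). *)
Definition ext02 d0 d1 d2 (W : 'M[C]_(d0 * d2)) : 'M[C]_(d0 * (d1 * d2)) :=
  mx3 (fun a b c a' b' c' =>
         W (mxvec_index a c) (mxvec_index a' c') * (b == b')%:R).

End QDefs.

(* Main.v *)
Require Import Defs.
From HB Require Import structures.
From mathcomp Require Import all_boot all_order all_algebra.
Import Order.TTheory GRing.Theory Num.Theory Num.Def.
Local Open Scope ring_scope.
Set Implicit Arguments.
Unset Strict Implicit.

Section Helpers.
Variable C : numClosedFieldType.

Lemma idx1E m n (i : 'I_m) (j : 'I_n) : idx1 (mxvec_index i j) = i.
Proof. by rewrite /idx1 /mxvec_index cast_ordK enum_rankK. Qed.
Lemma idx2E m n (i : 'I_m) (j : 'I_n) : idx2 (mxvec_index i j) = j.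
Proof. by rewrite /idx2 /mxvec_index cast_ordK enum_rankK. Qed.

Lemma sum_mxvec m n (F : 'I_(m * n) -> C) :
  \sum_k F k = \sum_(i < m) \sum_(j < n) F (mxvec_index i j).
Proof.
rewrite (reindex (uncurry (@mxvec_index m n))) /=; last exact: curry_mxvec_bij.
by rewrite pair_big /=; apply: eq_bigr => -[i j].
Qed.

Lemma kronE m n (A : 'M[C]_m) (B : 'M[C]_n) i j k l :
  kron A B (mxvec_index i j) (mxvec_index k l) = A i k * B j l.
Proof. by rewrite /kron mxE !idx1E !idx2E. Qed.

Lemma ptrace1E m n (X : 'M[C]_(m * n)) j j' :
  ptrace1 X j j' = \sum_(i < m) X (mxvec_index i j) (mxvec_index i j').
Proof. by rewrite mxE. Qed.

Lemma ptransp2E m n (X : 'M[C]_(m * n)) i j k l :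
  ptransp2 X (mxvec_index i j) (mxvec_index k l) = X (mxvec_index i l) (mxvec_index k j).
Proof. by rewrite mxE !idx1E !idx2E. Qed.

Lemma ext01E d0 d1 d2 (X : 'M[C]_(d0 * d1)) a b c a' b' c' :
  ext01 d2 X (mxvec_index a (mxvec_index b c)) (mxvec_index a' (mxvec_index b' c'))
  = X (mxvec_index a b) (mxvec_index a' b') * (c == c')%:R.
Proof. by rewrite /ext01 /mx3 mxE !(idx1E, idx2E). Qed.

Lemma ext02E d0 d1 d2 (W : 'M[C]_(d0 * d2)) a b c a' b' c' :
  ext02 d1 W (mxvec_index a (mxvec_index b c)) (mxvec_index a' (mxvec_index b' c'))
  = W (mxvec_index a c) (mxvec_index a' c') * (b == b')%:R.
Proof. by rewrite /ext02 /mx3 mxE !(idx1E, idx2E). Qed.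


End Helpers.
Section H2.
Variable C : numClosedFieldType.
Lemma choiE din dout (N : {linear 'M[C]_din -> 'M[C]_dout}) i j k l :
  choi N (mxvec_index i j) (mxvec_index k l) = N (delta_mx i k) j l.
Proof.
rewrite /choi summxE (bigD1 i) //=.
rewrite [X in _ + X]big1 => [|a ai]; last first.
  rewrite summxE big1 // => b _; rewrite kronE mxE.
  by rewrite (eq_sym i) (negbTE ai) mul0r.
rewrite addr0 summxE (bigD1 k) //= big1 => [|b bk]; last first.
  by rewrite kronE mxE (eq_sym k) (negbTE bk) andbF mul0r.
by rewrite kronE mxE !eqxx mul1r !addr0.
Qed.
End H2.
Section S.
Variable C : numClosedFieldType.

Lemma quadE n (u : 'rV[C]_n) (A : 'M[C]_n) :
  (u *m A *m dagger u) 0 0 = \sum_p \sum_q u 0 p * A p q * (u 0 q)^*.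
Proof.
rewrite mxE (exchange_big); apply: eq_bigr => q _.
rewrite mxE mulr_suml; apply: eq_bigr => p _.
by rewrite /dagger !mxE.
Qed.

Lemma herm_entry n (A : 'M[C]_n) : A = dagger A -> forall i j, A i j = (A j i)^*.
Proof. by move=> HA i j; rewrite {1}HA /dagger !mxE. Qed.

Lemma idxK m n (k : 'I_(m * n)) : mxvec_index (idx1 k) (idx2 k) = k.
Proof. by case/mxvec_indexP: k => i j; rewrite idx1E idx2E. Qed.

Definition swp m n (k : 'I_(m * n)) : 'I_(n * m) := mxvec_index (idx2 k) (idx1 k).

Lemma swpK m n : cancel (@swp m n) (@swp n m).
Proof. by move=> k; rewrite /swp idx1E idx2E idxK. Qed.

Lemma sum_swp m n (F : 'I_(n * m) -> C) : \sum_k F k = \sum_k F (@swp m n k).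
Proof.
rewrite (reindex (@swp m n)) //; exists (@swp n m) => k _; exact: swpK.
Qed.

Lemma psd_swap d1 d2 (D : 'M[C]_(d1 * d2)) : psd D ->
  psd (\matrix_(p, q) D (swp q) (swp p) : 'M[C]_(d2 * d1)).
Proof.
move=> [HD PD]; split.
  by apply/matrixP => p q; rewrite /dagger !mxE (herm_entry HD).
move=> u.
pose w : 'rV[C]_(d1 * d2) := \row_k (u 0 (swp k))^*.
set Y := (X in u *m X).
suff -> : (u *m Y *m dagger u) 0 0 = (w *m D *m dagger w) 0 0 by apply: PD.
rewrite !quadE.
rewrite exchange_big [RHS](@sum_swp d2 d1); apply: eq_bigr => q _.
rewrite [RHS](@sum_swp d2 d1); apply: eq_bigr => p _.
rewrite !mxE !swpK conjCK.
by rewrite [LHS]mulrC [u 0 p * _]mulrC mulrA.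
Qed.
Lemma sum_eq1 n (c : 'I_n) (F : 'I_n -> C) : \sum_x (c == x)%:R * F x = F c.
Proof.
rewrite (bigD1 c) //= big1 ?eqxx ?mul1r ?addr0 // => x xc.
by rewrite eq_sym (negbTE xc) mul0r.
Qed.

Lemma quad_maxent n (Z : 'M[C]_(n * n)) :
  ((\row_p (idx1 p == idx2 p)%:R) *m Z *m dagger (\row_p (idx1 p == idx2 p)%:R)) 0 0
  = \sum_c \sum_c' Z (mxvec_index c c) (mxvec_index c' c').
Proof.
rewrite quadE sum_mxvec; apply: eq_bigr => c _.
rewrite (bigD1 c) //= [X in _ + X]big1 => [|j cj]; last first.
  by rewrite big1 // => q _; rewrite mxE idx1E idx2E (eq_sym c) (negbTE cj) !mul0r.
rewrite addr0 sum_mxvec; apply: eq_bigr => c' _.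
rewrite (bigD1 c') //= [X in _ + X]big1 => [|j cj]; last first.
  by rewrite !mxE !idx1E !idx2E (eq_sym c') (negbTE cj) conjC0 mulr0.
by rewrite !mxE !idx1E !idx2E !eqxx conjC1 mulr1 mul1r addr0.
Qed.

Lemma cp_pos d1 d2 (N : {linear 'M[C]_d1 -> 'M[C]_d2}) (D : 'M[C]_(d1 * d2)) :
  CP N -> psd D ->
  0 <= \sum_(c < d2) \sum_(c' < d2) \sum_(a < d1) \sum_(b < d1)
          D (mxvec_index b c') (mxvec_index a c) * N (delta_mx a b) c c'.
Proof.
move=> HN HD; have [_ /(_ (\row_p (idx1 p == idx2 p)%:R)) ] := HN _ _ (psd_swap HD).
rewrite quad_maxent; congr (0 <= _); apply: eq_bigr => c _; apply: eq_bigr => c' _.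
rewrite mxE !idx1E !idx2E.
rewrite [X in N X]matrix_sum_delta linear_sum summxE; apply: eq_bigr => a _.
rewrite linear_sum summxE; apply: eq_bigr => b _.
by rewrite linearZ !mxE /swp !idx1E !idx2E.
Qed.
End S.
Section S4.
Variable C : numClosedFieldType.

Lemma Mentry d0 d1 d2 (N10 : {linear 'M[C]_d0 -> 'M[C]_d1}) (W : 'M[C]_(d0 * d2)) i b c' i2 a c :
  (ext01 d2 (ptransp2 (choi N10)) *m ext02 d1 W) (mxvec_index i (mxvec_index b c'))
     (mxvec_index i2 (mxvec_index a c))
  = \sum_(i' < d0) N10 (delta_mx i i') a b * W (mxvec_index i' c') (mxvec_index i2 c).
Proof.
rewrite mxE sum_mxvec; apply: eq_bigr => i' _.
rewrite sum_mxvec (bigD1 a) //= [X in _ + X]big1 => [|b2 b2a]; last first.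
  rewrite big1 // => c2 _; rewrite ext01E ext02E.
  by rewrite (negbTE b2a) !mulr0.
rewrite addr0 (bigD1 c') //= [X in _ + X]big1 => [|c2 c2c]; last first.
  by rewrite ext01E ext02E (eq_sym c') (negbTE c2c) mulr0 mul0r.
by rewrite ext01E ext02E ptransp2E choiE !eqxx !mulr1 addr0.
Qed.
Lemma tr_delta n (a b : 'I_n) : \tr (delta_mx a b : 'M[C]_n) = (a == b)%:R.
Proof.
rewrite /mxtrace (bigD1 a) //= [X in _ + X]big1 => [|i ia]; last first.
  by rewrite mxE (negbTE ia).
by rewrite mxE eqxx addr0.
Qed.

Lemma E2 d1 d2 (N21 : {linear 'M[C]_d1 -> 'M[C]_d2}) (Lam : 'M[C]_d1) :
  TP N21 ->
  \sum_(c < d2) \sum_(c' < d2) \sum_(a < d1) \sum_(b < d1)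
     (Lam b a * (c' == c)%:R * N21 (delta_mx a b) c c') = \tr Lam.
Proof.
move=> TP21.
have -> : \sum_(c < d2) \sum_(c' < d2) \sum_(a < d1) \sum_(b < d1)
     (Lam b a * (c' == c)%:R * N21 (delta_mx a b) c c') =
   \sum_(c < d2) \sum_(a < d1) \sum_(b < d1) (Lam b a * N21 (delta_mx a b) c c).
  apply: eq_bigr => c _.
  rewrite (bigD1 c) //= [X in _ + X]big1 => [|c' cc]; last first.
    by rewrite big1 // => a _; rewrite big1 // => b _; rewrite (negbTE cc) mulr0 mul0r.
  by rewrite addr0; apply: eq_bigr => a _; apply: eq_bigr => b _; rewrite eqxx mulr1.
rewrite exchange_big /=.
under eq_bigr => a _ do rewrite exchange_big /=.
rewrite /mxtrace; apply: eq_bigr => a _.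
rewrite (bigD1 a) //= [X in _ + X]big1 => [|b ba]; last first.
  by rewrite -mulr_sumr -/(mxtrace _) TP21 tr_delta (eq_sym a) (negbTE ba) mulr0.
by rewrite addr0 -mulr_sumr -/(mxtrace _) TP21 tr_delta eqxx mulr1.
Qed.
Lemma E1 d0 d1 d2 (N10 : {linear 'M[C]_d0 -> 'M[C]_d1}) (N21 : {linear 'M[C]_d1 -> 'M[C]_d2})
  (N20 : {linear 'M[C]_d0 -> 'M[C]_d2}) (W : 'M[C]_(d0 * d2)) :
  (forall X, N20 X = N21 (N10 X)) ->
  \sum_(c < d2) \sum_(c' < d2) \sum_(a < d1) \sum_(b < d1)
     ((\sum_(i < d0) \sum_(i' < d0) N10 (delta_mx i i') a b * W (mxvec_index i' c') (mxvec_index i c))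
        * N21 (delta_mx a b) c c') = \tr (W *m choi N20).
Proof.
move=> H.
rewrite /mxtrace sum_mxvec.
have -> : \sum_(i < d0) \sum_(j < d2) (W *m choi N20) (mxvec_index i j) (mxvec_index i j)
  = \sum_(i' < d0) \sum_(c' < d2) \sum_(i < d0) \sum_(c < d2) \sum_(a < d1) \sum_(b < d1)
      W (mxvec_index i' c') (mxvec_index i c) * (N10 (delta_mx i i') a b * N21 (delta_mx a b) c c').
  apply: eq_bigr => i' _; apply: eq_bigr => c' _.
  rewrite mxE sum_mxvec; apply: eq_bigr => i _; apply: eq_bigr => c _.
  rewrite choiE H {1}(matrix_sum_delta (N10 (delta_mx i i'))) !linear_sum summxE mulr_sumr.
  apply: eq_bigr => a _; rewrite linear_sum summxE mulr_sumr; apply: eq_bigr => b _.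
  by rewrite linearZ !mxE.
under eq_bigr => c _ do under eq_bigr => c' _ do under eq_bigr => a _ do
  under eq_bigr => b _ do rewrite mulr_suml.
under eq_bigr => c _ do under eq_bigr => c' _ do under eq_bigr => a _ do
  under eq_bigr => b _ do under eq_bigr => i _ do rewrite mulr_suml.
under eq_bigr => x1 _ do under eq_bigr => x2 _ do under eq_bigr => x3 _ do under eq_bigr => x4 _ do rewrite exchange_big /=.
under eq_bigr => x1 _ do under eq_bigr => x2 _ do under eq_bigr => x3 _ do rewrite exchange_big /=.
under eq_bigr => x1 _ do under eq_bigr => x2 _ do rewrite exchange_big /=.
under eq_bigr => x1 _ do rewrite exchange_big /=.
rewrite exchange_big /=.
apply: eq_bigr => i' _.
rewrite exchange_big /=.
apply: eq_bigr => c' _.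
under eq_bigr => x1 _ do under eq_bigr => x2 _ do rewrite exchange_big /=.
under eq_bigr => x1 _ do rewrite exchange_big /=.
rewrite exchange_big /=.
apply: eq_bigr => i _; apply: eq_bigr => c _; apply: eq_bigr => a _; apply: eq_bigr => b _.
by rewrite mulrCA mulrA.
Qed.

Lemma Dentry d0 d1 d2 (N10 : {linear 'M[C]_d0 -> 'M[C]_d1}) (W : 'M[C]_(d0 * d2)) (Lam : 'M[C]_d1) b c' a c :
  ((- ptrace1 (ext01 d2 (ptransp2 (choi N10)) *m ext02 d1 W)) - kron Lam (1%:M : 'M[C]_d2))
    (mxvec_index b c') (mxvec_index a c)
  = - (\sum_(i < d0) \sum_(i' < d0) N10 (delta_mx i i') a b * W (mxvec_index i' c') (mxvec_index i c))
    - Lam b a * (c' == c)%:R.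
Proof.
rewrite mxE [X in X + _]mxE [X in _ + X]mxE ptrace1E kronE [_ c' c]mxE.
by congr (- _ - _); apply: eq_bigr => i _; rewrite Mentry.
Qed.
End S4.
Unset Implicit Arguments.
Set Strict Implicit.

Theorem mainTheorem3 (C : numClosedFieldType) (d0 d1 d2 : nat)
  (N10 : {linear 'M[C]_d0 -> 'M[C]_d1})
  (N20 : {linear 'M[C]_d0 -> 'M[C]_d2}) :
  CPTP N10 -> CPTP N20 ->
  (exists N21 : {linear 'M[C]_d1 -> 'M[C]_d2},
      CPTP N21 /\ (forall X : 'M[C]_d0, N20 X = N21 (N10 X))) ->
  forall (W : 'M[C]_(d0 * d2)) (Psi0 Psi1 : 'M[C]_d0) (Lambda : 'M[C]_d1),
    psd (block_mx (kron Psi0 (1%:M : 'M[C]_d2)) W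
                  (dagger W) (kron Psi1 (1%:M : 'M[C]_d2))) ->
    \tr Psi0 = 1 -> \tr Psi1 = 1 ->
    opLe (kron Lambda (1%:M : 'M[C]_d2))
         (- ptrace1 (ext01 d2 (ptransp2 (choi N10)) *m ext02 d1 W)) ->
    \tr (W *m choi N20) + \tr Lambda <= 0.
Proof.
move=> _ _ [N21 [[CP21 TP21] H21]] W Psi0 Psi1 Lam _ _ _ HD.
have := cp_pos CP21 HD.
under eq_bigr => c _ do under eq_bigr => c' _ do under eq_bigr => a _ do
  under eq_bigr => b _ do rewrite Dentry mulrBl mulNr -opprD.
under eq_bigr => c _ do under eq_bigr => c' _ do under eq_bigr => a _ do
  rewrite sumrN big_split /=.
under eq_bigr => c _ do under eq_bigr => c' _ do rewrite sumrN big_split /=.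
under eq_bigr => c _ do rewrite sumrN big_split /=.
rewrite sumrN big_split /= (E1 W H21) (E2 Lam TP21).
by rewrite oppr_ge0.
Qed.
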